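(* Let $p\in\mathbb{R}^3$ and suppose that the Hugoniot curve $\mathcal{H}(p)$ meets the characteristic plane $\mathcal{C}$ in two distinct points $q_0$ and $q_1$. Then one of these points lies in $\mathcal{C}_s$ and the other lies in $\mathcal{C}_f$. Moreover, the value of $\sigma$ at the point lying in $\mathcal{C}_s$ is strictly smaller than the value of $\sigma$ at the point lying in $\mathcal{C}_f$.
   Context: Fix real constants $a_1,a_2,a_3,a_4$ and $b_1>1$, and put $c=a_3-a_2$, assumed $>0$. The model is the system $W_t+F(W)_x=0$, $W=(u,v)$, with flux $F=(f,g)$, $f(u,v)=(b_1+1)u^2/2+v^2/2+a_1u+a_2v$, $g(u,v)=uv+a_3u+a_4v$. We work in coordinates $(z,\tau,Y)\in\mathbb{R}^3$ (a chart of the wave manifold). Define $\widetilde U(z,\tau)=\frac{2cz}{z^2+1}+c\tau(z^2-1)$, $V_1(z,\tau)=\frac{c}{z^2+1}+c\tau z$, $U=(\widetilde U-a_1+a_4)/b_1$, $V=V_1-a_3$. The point $(z,\tau,Y)$ represents the shock with left state $W(z,\tau,Y)=(U+zY/2,\;V+Y/2)$ and right state $W'(z,\tau,Y)=(U-zY/2,\;V-Y/2)$, with shock speed $\sigma(z,\tau,Y)=\frac{c}{b_1}[(b_1+1)z^2-1]\tau+\frac{c}{b_1}\frac{(b_1+2)z}{z^2+1}+\sigma_0$, where $\sigma_0=[(b_1+1)a_4-a_1]/b_1$. For $p\in\mathbb{R}^3$, the Hugoniot curve is $\mathcal{H}(p)=\{q\in\mathbb{R}^3: W(q)=W(p)\}$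 and the Hugoniot$'$ curve is $\mathcal{H}'(p)=\{q: W'(q)=W'(p)\}$ (each is the graph of a function of $z\in\mathbb{R}$). The characteristic plane is $\mathcal{C}=\{Y=0\}$, with $\mathcal{C}_s=\{Y=0,\tau<0\}$ and $\mathcal{C}_f=\{Y=0,\tau>0\}$. *)

(* Defs.v *)
From Stdlib Require Import Reals.
Open Scope R_scope.

(* A point of the chart (z, tau, Y) of the wave manifold. *)
Record pt := mkpt { pz : R; ptau : R; pY : R }.

Record params := mkparams { a1 : R; a2 : R; a3 : R; a4 : R; b1 : R }.

Section Model.
Variable P : params.
Let a1 := a1 P. Let a2 := a2 P. Let a3 := a3 P. Let a4 := a4 P. Let b1 := b1 P.

Definition cc : R := a3 - a2.

Definition Utilde (z tau : R) : R :=
  2 * cc * z / (z ^ 2 + 1) + cc * tau * (z ^ 2 - 1).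
Definition V1 (z tau : R) : R := cc / (z ^ 2 + 1) + cc * tau * z.
Definition UU (z tau : R) : R := (Utilde z tau - a1 + a4) / b1.
Definition VV (z tau : R) : R := V1 z tau - a3.

Definition Wl (q : pt) : R * R :=
  (UU (pz q) (ptau q) + pz q * pY q / 2, VV (pz q) (ptau q) + pY q / 2).
Definition Wr (q : pt) : R * R :=
  (UU (pz q) (ptau q) - pz q * pY q / 2, VV (pz q) (ptau q) - pY q / 2).

Definition sigma0 : R := ((b1 + 1) * a4 - a1) / b1.
Definition shock_speed (q : pt) : R :=
  cc / b1 * ((b1 + 1) * pz q ^ 2 - 1) * ptau q
  + cc / b1 * ((b1 + 2) * pz q / (pz q ^ 2 + 1)) + sigma0.

Definition Hugoniot (p q : pt) : Prop := Wl q = Wl p.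
Definition Hugoniot' (p q : pt) : Prop := Wr q = Wr p.

End Model.

Definition inC (q : pt) : Prop := pY q = 0.
Definition inCs (q : pt) : Prop := pY q = 0 /\ ptau q < 0.
Definition inCf (q : pt) : Prop := pY q = 0 /\ ptau q > 0.

(* Main.v *)
Require Import Defs.
From Stdlib Require Import Reals Lra Psatz.
Open Scope R_scope.

Lemma key_rel (P : params) (x t A B : R) :
  b1 P <> 0 ->
  Utilde P x t = A -> V1 P x t = B ->
  x * A - (x^2 - 1) * B = cc P /\ cc P * t * (x^2 + 1) = 2 * x * B - A.
Proof.
  intros hb hU hV. unfold Utilde, V1 in *. subst A B.
  assert (x^2+1 <> 0) by nra.
  split; field; auto.
Qed.

Theorem proposition1 (P : params) (hb1 : 1 < b1 P) (hc : 0 < a3 P - a2 P)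
  (p q0 q1 : pt) :
  q0 <> q1 ->
  Hugoniot P p q0 -> inC q0 ->
  Hugoniot P p q1 -> inC q1 ->
  (inCs q0 /\ inCf q1 /\ shock_speed P q0 < shock_speed P q1) \/
  (inCs q1 /\ inCf q0 /\ shock_speed P q1 < shock_speed P q0).
Proof.
  intros hne h0 c0 h1 c1.
  unfold Hugoniot, Wl, inC in *.
  destruct q0 as [x0 t0 y0], q1 as [x1 t1 y1]; simpl in *; subst y0 y1.
  rewrite <- h1 in h0. injection h0; clear h0 h1; intros hV hU.
  assert (hb : b1 P <> 0) by lra.
  unfold UU, VV in *.
  set (A := Utilde P x1 t1). set (B := V1 P x1 t1).
  assert (hU' : Utilde P x0 t0 = A).
  { unfold A. apply (Rmult_eq_reg_r (/ b1 P)); [|apply Rinv_neq_0_compat; auto].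
    unfold Rdiv in hU. lra. }
  assert (hV' : V1 P x0 t0 = B) by (unfold B; lra).
  destruct (key_rel P x0 t0 A B hb hU' hV') as [e0 f0].
  destruct (key_rel P x1 t1 A B hb eq_refl eq_refl) as [e1 f1].
  assert (hcc : 0 < cc P) by (unfold cc; lra).
  clearbody A B.
  assert (hx : x0 <> x1).
  { intro E. subst x1. apply hne. f_equal.
    apply (Rmult_eq_reg_l (cc P * (x0^2+1))); [|nra]. nra. }
  assert (hA : A = (x0 + x1) * B).
  { apply (Rmult_eq_reg_l (x0 - x1)); [|lra]. nra. }
  subst A.
  assert (hC : cc P = B * (1 + x0 * x1)) by nra.
  assert (hB : B <> 0) by (intro; subst; nra).
  assert (hD : 1 + x0 * x1 <> 0) by (intro E; rewrite E in hC; lra).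
  assert (q0p : 0 < x0^2+1) by nra.
  assert (q1p : 0 < x1^2+1) by nra.
  assert (T0 : t0 = B * (x0 - x1) / (cc P * (x0^2+1))).
  { apply (Rmult_eq_reg_l (cc P * (x0^2+1))); [|nra].
    field_simplify; [nra| nra]. }
  assert (T1 : t1 = - (B * (x0 - x1)) / (cc P * (x1^2+1))).
  { apply (Rmult_eq_reg_l (cc P * (x1^2+1))); [|nra].
    field_simplify; [nra| nra]. }
  assert (S : shock_speed P (mkpt x0 t0 0) - shock_speed P (mkpt x1 t1 0)
              = B * (x0 - x1)).
  { unfold shock_speed; simpl. rewrite T0, T1, hC.
    field. repeat split; nra. }
  assert (hs : B * (x0 - x1) <> 0).
  { intro E. apply Rmult_integral in E. destruct E; [auto|lra]. }
  assert (F0 : cc P * (x0^2+1) * t0 = B * (x0 - x1)) by nra.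
  assert (F1 : cc P * (x1^2+1) * t1 = - (B * (x0 - x1))) by nra.
  assert (pc0 : 0 < cc P * (x0^2+1)) by nra.
  assert (pc1 : 0 < cc P * (x1^2+1)) by nra.
  unfold inCs, inCf; simpl.
  destruct (Rlt_dec 0 (B * (x0 - x1))) as [Hp|Hn].
  - right. split; [split; [auto|nra]|split; [split; [auto|nra]|lra]].
  - left. split; [split; [auto|nra]|split; [split; [auto|nra]|lra]].
Qed.
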